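(* Let $P,PA$ be labelings, $c$ a command and $\rho_1,\rho_2,\mu_1,\mu_2$ states. Assume $\mathtt b\notin\mathrm{UsedVars}(c)$, $\rho_1(\mathtt b)=\rho_2(\mathtt b)=0$, $|a|_{\mu_1}>0$ and $|a|_{\mu_2}>0$ for every array $a$, $P;PA\vdash_{ct}c$, $\rho_1\sim_P\rho_2$ and $\mu_1\sim_{PA}\mu_2$. Then $\langle\mathrm{SvSLH}_P(c),\rho_1,\mu_1,\mathtt{false}\rangle\approx_s\langle\mathrm{SvSLH}_P(c),\rho_2,\mu_2,\mathtt{false}\rangle$.
   Context: Language AWhile: scalar variables $X\in\mathcal V$, arrays $a\in\mathcal A$; $e::=n\mid X\mid\mathrm{op}_{\mathbb N}(e,\dots,e)\mid be\,?\,e_1:e_2$; $be::=\mathtt{true}\mid\mathtt{false}\mid\mathrm{cmp}(e,e)\mid\mathrm{op}_{\mathbb B}(be,\dots,be)$; $c::=\mathtt{skip}\mid X:=e\mid c_1;c_2\mid\mathtt{if}\ be\ \mathtt{then}\ c_1\ \mathtt{else}\ c_2\mid\mathtt{while}\ be\ \mathtt{do}\ c\mid X\leftarrow a[e]\mid a[e]\leftarrow e'$. Scalar state $\rho:\mathcal V\to\mathbb N$; array state $\mu$ with sizes $|a|_\mu$ and values $\mu(a)[i]$; $[\![\cdot]\!]_\rho$ pure evaluation. $\mathrm{UsedVars}(c)$: scalar variables occurring in $c$; $\mathtt b$ a reserved scalar variable. Speculative semantics: configurations $\langle c,\rho,\mu,\beta\rangle$; steps labelled by optional observation ($\mathrm{branch}(v),\mathrm{read}(a,i),\mathrm{write}(a,i)$)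 and optional directive ($\mathit{step},\mathit{force},\mathrm{load}(a',j),\mathrm{store}(a',j)$). $X:=e\to\mathtt{skip}$ updating $X$; $c_1;c_2\to c_1';c_2$ if $c_1\to c_1'$; $\mathtt{skip};c\to c$; $\mathtt{while}\ be\ \mathtt{do}\ c\to\mathtt{if}\ be\ \mathtt{then}\ (c;\mathtt{while}\ be\ \mathtt{do}\ c)\ \mathtt{else}\ \mathtt{skip}$ (no obs, no directive, flag kept). Conditional: $\mathit{step}$ goes to branch $v=[\![be]\!]_\rho$; $\mathit{force}$ goes to branch $\neg v$ and sets $\beta:=\mathtt{true}$; obs $\mathrm{branch}(v)$. $X\leftarrow a[ie]$: with $\mathit{step}$ needs $i=[\![ie]\!]_\rho<|a|_\mu$, $X:=\mu(a)[i]$; with $\mathrm{load}(a',j)$ needs $\beta=\mathtt{true}$, $i\ge|a|_\mu$, $j<|a'|_\mu$, $X:=\mu(a')[j]$; obs $\mathrm{read}(a,i)$. $a[ie]\leftarrow e$: with $\mathit{step}$ needs $i<|a|_\mu$, $\mu[a[i]\mapsto[\![e]\!]_\rho]$; with $\mathrm{store}(a',j)$ needs $\beta=\mathtt{true}$, $i\ge|a|_\mu$, $j<|a'|_\mu$, $\mu[a'[j]\mapsto[\![e]\!]_\rho]$; obs $\mathrm{write}(a,i)$. $\langle c_1,\rho_1,\mu_1,\beta_1\rangle\approx_s\langle c_2,\rho_2,\mu_2,\beta_2\rangle$ iff for all $D,O_1,O_2$, whenever both multi-step with the same directive list $D$ producing $O_1,O_2$, $O_1=O_2$. Labels: $\mathtt{true}$=public,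 $\mathtt{false}$=secret; $\ell_1\sqsubseteq\ell_2$ iff $\ell_2=\mathtt{true}\Rightarrow\ell_1=\mathtt{true}$. $P(e),P(be)$ public iff all variables occurring are public. $\rho_1\sim_P\rho_2$: agreement on public scalar variables; $\mu_1\sim_{PA}\mu_2$: agreement on sizes and contents of public arrays. CCT typing $P;PA\vdash_{ct}c$: $\mathtt{skip}$; $X:=e$ if $P(e)\sqsubseteq P(X)$; $c_1;c_2$ if both typed; $\mathtt{if}$ if $P(be)=\mathtt{true}$ and both branches typed; $\mathtt{while}$ if $P(be)=\mathtt{true}$ and body typed; $X\leftarrow a[i]$ if $P(i)=\mathtt{true}$ and $PA(a)\sqsubseteq P(X)$; $a[i]\leftarrow e$ if $P(i)=\mathtt{true}$ and $P(e)\sqsubseteq PA(a)$. Transformation $\mathrm{SvSLH}_P$: $\mathtt{skip}$, $X:=e$, $a[i]\leftarrow e$ unchanged; sequences translated componentwise; $\mathtt{if}\ be\ \mathtt{then}\ c_1\ \mathtt{else}\ c_2\mapsto\mathtt{if}\ be\ \mathtt{then}\ (\mathtt b:=be\,?\,\mathtt b:1;[\![c_1]\!])\ \mathtt{else}\ (\mathtt b:=be\,?\,1:\mathtt b;[\![c_2]\!])$; $\mathtt{while}\ be\ \mathtt{do}\ c\mapsto(\mathtt{while}\ be\ \mathtt{do}\ (\mathtt b:=be\,?\,\mathtt b:1;[\![c]\!]));\ \mathtt b:=be\,?\,1:\mathtt b$; $X\leftarrow a[i]\mapsto(X\leftarrow a[i];\ X:=(\mathtt b==1)\,?\,0:X)$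 if $P(X)=\mathtt{true}$, and unchanged otherwise. *)

(* Defs.v *)
From Stdlib Require Import String List Bool Arith.
Import ListNotations.
Open Scope string_scope.

(* Scalar variables and arrays are both named by strings (separate namespaces). *)
Definition var := string.
Definition arr := string.

(* op_N is represented by an arbitrary binary function on nat,
   cmp by an arbitrary binary nat relation (bool-valued),
   op_B by arbitrary unary / binary boolean functions. *)
Inductive aexp : Type :=
  | ANum (n : nat)
  | AId (x : var)
  | ABin (op : nat -> nat -> nat) (e1 e2 : aexp)
  | ACTIf (be : bexp) (e1 e2 : aexp)
with bexp : Type :=
  | BTrue
  | BFalse
  | BCmp (cmp : nat -> nat -> bool) (e1 e2 : aexp)
  | BUn (op : bool -> bool) (be : bexp)
  | BBin (op : bool -> bool -> bool) (be1 be2 : bexp).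

Inductive com : Type :=
  | Skip
  | Asgn (x : var) (e : aexp)
  | Seq (c1 c2 : com)
  | If (be : bexp) (c1 c2 : com)
  | While (be : bexp) (c : com)
  | ARead (x : var) (a : arr) (i : aexp)
  | AWrite (a : arr) (i : aexp) (e : aexp).

Definition state := var -> nat.
Definition astate := arr -> list nat.           (* mu; |a|_mu = length (mu a) *)

Definition upd (rho : state) (x : var) (v : nat) : state :=
  fun y => if String.eqb x y then v else rho y.

Fixpoint aeval (rho : state) (e : aexp) : nat :=
  match e with
  | ANum n => n
  | AId x => rho x
  | ABin op e1 e2 => op (aeval rho e1) (aeval rho e2)
  | ACTIf be e1 e2 => if beval rho be then aeval rho e1 else aeval rho e2
  end
with beval (rho : state) (be : bexp) : bool :=
  match be with
  | BTrue => true
  | BFalse => false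
  | BCmp cmp e1 e2 => cmp (aeval rho e1) (aeval rho e2)
  | BUn op b1 => op (beval rho b1)
  | BBin op b1 b2 => op (beval rho b1) (beval rho b2)
  end.

Fixpoint list_upd (l : list nat) (i : nat) (v : nat) : list nat :=
  match l, i with
  | [], _ => []
  | _ :: t, 0 => v :: t
  | h :: t, S i' => h :: list_upd t i' v
  end.

Definition aupd (mu : astate) (a : arr) (i v : nat) : astate :=
  fun b => if String.eqb a b then list_upd (mu a) i v else mu b.

Inductive observation : Type :=
  | OBranch (v : bool)
  | ORead (a : arr) (i : nat)
  | OWrite (a : arr) (i : nat).

Inductive direction : Type :=
  | DStep
  | DForce
  | DLoad (a : arr) (j : nat)
  | DStore (a : arr) (j : nat).

Definition config : Type := (com * state * astate * bool)%type.

Inductive spec_step : config -> config -> option direction -> option observation -> Prop :=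
  | SS_Asgn : forall x e rho mu bt,
      spec_step (Asgn x e, rho, mu, bt) (Skip, upd rho x (aeval rho e), mu, bt) None None
  | SS_Seq : forall c1 c1' c2 rho mu bt rho' mu' bt' d o,
      spec_step (c1, rho, mu, bt) (c1', rho', mu', bt') d o ->
      spec_step (Seq c1 c2, rho, mu, bt) (Seq c1' c2, rho', mu', bt') d o
  | SS_SeqSkip : forall c rho mu bt,
      spec_step (Seq Skip c, rho, mu, bt) (c, rho, mu, bt) None None
  | SS_IfStep : forall be c1 c2 rho mu bt,
      spec_step (If be c1 c2, rho, mu, bt)
        ((if beval rho be then c1 else c2), rho, mu, bt)
        (Some DStep) (Some (OBranch (beval rho be)))
  | SS_IfForce : forall be c1 c2 rho mu bt,
      spec_step (If be c1 c2, rho, mu, bt)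
        ((if beval rho be then c2 else c1), rho, mu, true)
        (Some DForce) (Some (OBranch (beval rho be)))
  | SS_While : forall be c rho mu bt,
      spec_step (While be c, rho, mu, bt)
        (If be (Seq c (While be c)) Skip, rho, mu, bt) None None
  | SS_ARead : forall x a ie rho mu bt i,
      i = aeval rho ie -> i < length (mu a) ->
      spec_step (ARead x a ie, rho, mu, bt)
        (Skip, upd rho x (nth i (mu a) 0), mu, bt)
        (Some DStep) (Some (ORead a i))
  | SS_ARead_U : forall x a ie rho mu i a' j,
      i = aeval rho ie -> length (mu a) <= i -> j < length (mu a') ->
      spec_step (ARead x a ie, rho, mu, true)
        (Skip, upd rho x (nth j (mu a') 0), mu, true)
        (Some (DLoad a' j)) (Some (ORead a i))
  | SS_AWrite : forall a ie e rho mu bt i,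
      i = aeval rho ie -> i < length (mu a) ->
      spec_step (AWrite a ie e, rho, mu, bt)
        (Skip, rho, aupd mu a i (aeval rho e), bt)
        (Some DStep) (Some (OWrite a i))
  | SS_AWrite_U : forall a ie e rho mu i a' j,
      i = aeval rho ie -> length (mu a) <= i -> j < length (mu a') ->
      spec_step (AWrite a ie e, rho, mu, true)
        (Skip, rho, aupd mu a' j (aeval rho e), true)
        (Some (DStore a' j)) (Some (OWrite a i)).

Definition olist {A : Type} (o : option A) : list A :=
  match o with Some x => [x] | None => [] end.

Inductive multi_spec : config -> config -> list direction -> list observation -> Prop :=
  | MS_Refl : forall cf, multi_spec cf cf [] []
  | MS_Step : forall cf1 cf2 cf3 d o ds os,
      spec_step cf1 cf2 d o ->
      multi_spec cf2 cf3 ds os ->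
      multi_spec cf1 cf3 (olist d ++ ds) (olist o ++ os).

Definition spec_obs_equiv (cf1 cf2 : config) : Prop :=
  forall ds os1 os2 cf1' cf2',
    multi_spec cf1 cf1' ds os1 ->
    multi_spec cf2 cf2' ds os2 ->
    os1 = os2.

(* true = public, false = secret *)
Definition label := bool.
Definition pub_vars := var -> label.
Definition pub_arrs := arr -> label.

(* l1 ⊑ l2  iff  (l2 = public -> l1 = public) *)
Definition can_flow (l1 l2 : label) : bool := implb l2 l1.

Fixpoint label_of_aexp (P : pub_vars) (e : aexp) : label :=
  match e with
  | ANum _ => true
  | AId x => P x
  | ABin _ e1 e2 => label_of_aexp P e1 && label_of_aexp P e2
  | ACTIf be e1 e2 => label_of_bexp P be && label_of_aexp P e1 && label_of_aexp P e2
  end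
with label_of_bexp (P : pub_vars) (be : bexp) : label :=
  match be with
  | BTrue | BFalse => true
  | BCmp _ e1 e2 => label_of_aexp P e1 && label_of_aexp P e2
  | BUn _ b1 => label_of_bexp P b1
  | BBin _ b1 b2 => label_of_bexp P b1 && label_of_bexp P b2
  end.

Inductive ct_well_typed (P : pub_vars) (PA : pub_arrs) : com -> Prop :=
  | CT_Skip : ct_well_typed P PA Skip
  | CT_Asgn : forall x e,
      can_flow (label_of_aexp P e) (P x) = true ->
      ct_well_typed P PA (Asgn x e)
  | CT_Seq : forall c1 c2,
      ct_well_typed P PA c1 -> ct_well_typed P PA c2 ->
      ct_well_typed P PA (Seq c1 c2)
  | CT_If : forall be c1 c2,
      label_of_bexp P be = true ->
      ct_well_typed P PA c1 -> ct_well_typed P PA c2 ->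
      ct_well_typed P PA (If be c1 c2)
  | CT_While : forall be c,
      label_of_bexp P be = true -> ct_well_typed P PA c ->
      ct_well_typed P PA (While be c)
  | CT_ARead : forall x a i,
      label_of_aexp P i = true ->
      can_flow (PA a) (P x) = true ->
      ct_well_typed P PA (ARead x a i)
  | CT_AWrite : forall a i e,
      label_of_aexp P i = true ->
      can_flow (label_of_aexp P e) (PA a) = true ->
      ct_well_typed P PA (AWrite a i e).

Fixpoint vars_aexp (e : aexp) : list var :=
  match e with
  | ANum _ => []
  | AId x => [x]
  | ABin _ e1 e2 => vars_aexp e1 ++ vars_aexp e2
  | ACTIf be e1 e2 => vars_bexp be ++ vars_aexp e1 ++ vars_aexp e2
  end
with vars_bexp (be : bexp) : list var :=
  match be with
  | BTrue | BFalse => []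
  | BCmp _ e1 e2 => vars_aexp e1 ++ vars_aexp e2
  | BUn _ b1 => vars_bexp b1
  | BBin _ b1 b2 => vars_bexp b1 ++ vars_bexp b2
  end.

Fixpoint used_vars (c : com) : list var :=
  match c with
  | Skip => []
  | Asgn x e => x :: vars_aexp e
  | Seq c1 c2 => used_vars c1 ++ used_vars c2
  | If be c1 c2 => vars_bexp be ++ used_vars c1 ++ used_vars c2
  | While be c => vars_bexp be ++ used_vars c
  | ARead x _ i => x :: vars_aexp i
  | AWrite _ i e => vars_aexp i ++ vars_aexp e
  end.

Definition pub_equiv (P : pub_vars) (rho1 rho2 : state) : Prop :=
  forall x, P x = true -> rho1 x = rho2 x.

Definition apub_equiv (PA : pub_arrs) (mu1 mu2 : astate) : Prop :=
  forall a, PA a = true -> mu1 a = mu2 a.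

(* the reserved misspeculation flag variable *)
Definition msf : var := "b".

Fixpoint sel_slh (P : pub_vars) (c : com) : com :=
  match c with
  | Skip => Skip
  | Asgn x e => Asgn x e
  | Seq c1 c2 => Seq (sel_slh P c1) (sel_slh P c2)
  | If be c1 c2 =>
      If be (Seq (Asgn msf (ACTIf be (AId msf) (ANum 1))) (sel_slh P c1))
            (Seq (Asgn msf (ACTIf be (ANum 1) (AId msf))) (sel_slh P c2))
  | While be c1 =>
      Seq (While be (Seq (Asgn msf (ACTIf be (AId msf) (ANum 1))) (sel_slh P c1)))
          (Asgn msf (ACTIf be (ANum 1) (AId msf)))
  | ARead x a i =>
      if P x then
        Seq (ARead x a i)
            (Asgn x (ACTIf (BCmp Nat.eqb (AId msf) (ANum 1)) (ANum 0) (AId x)))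
      else ARead x a i
  | AWrite a i e => AWrite a i e
  end.

(* Main.v *)
Require Import Defs.
From Stdlib Require Import String List Bool Arith Lia.
Import ListNotations.

Scheme aexp_mut := Induction for aexp Sort Prop
with bexp_mut := Induction for bexp Sort Prop.

Lemma eval_pub : forall P r1 r2, pub_equiv P r1 r2 ->
  (forall e, label_of_aexp P e = true -> aeval r1 e = aeval r2 e) /\
  (forall b, label_of_bexp P b = true -> beval r1 b = beval r2 b).
Proof.
  intros P r1 r2 H. split.
  - apply (aexp_mut (fun e => label_of_aexp P e = true -> aeval r1 e = aeval r2 e)
                    (fun b => label_of_bexp P b = true -> beval r1 b = beval r2 b));
    simpl; intros; repeat match goal with H: _ && _ = true |- _ => apply andb_prop in H; destruct H end;
    try f_equal; auto.
    rewrite H0, H1, H2 by auto. reflexivity.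
  - apply (bexp_mut (fun e => label_of_aexp P e = true -> aeval r1 e = aeval r2 e)
                    (fun b => label_of_bexp P b = true -> beval r1 b = beval r2 b));
    simpl; intros; repeat match goal with H: _ && _ = true |- _ => apply andb_prop in H; destruct H end;
    try f_equal; auto.
    rewrite H0, H1, H2 by auto. reflexivity.
Qed.
Definition setT be := Asgn msf (ACTIf be (AId msf) (ANum 1)).
Definition setF be := Asgn msf (ACTIf be (ANum 1) (AId msf)).
Definition maskc x := Asgn x (ACTIf (BCmp Nat.eqb (AId msf) (ANum 1)) (ANum 0) (AId x)).
Definition Wl be sb := While be (Seq (setT be) sb).

Inductive wfc (P : pub_vars) (PA : pub_arrs) : com -> Prop :=
 | w_skip : wfc P PA Skip
 | w_asgn : forall x e, x <> msf -> can_flow (label_of_aexp P e) (P x) = true -> wfc P PA (Asgn x e)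
 | w_setT : forall be, label_of_bexp P be = true -> wfc P PA (setT be)
 | w_setF : forall be, label_of_bexp P be = true -> wfc P PA (setF be)
 | w_read : forall x a i, x <> msf -> label_of_aexp P i = true -> P x = false -> wfc P PA (ARead x a i)
 | w_readm : forall x a i, x <> msf -> label_of_aexp P i = true -> P x = true -> PA a = true ->
     wfc P PA (Seq (ARead x a i) (maskc x))
 | w_write : forall a i e, label_of_aexp P i = true -> can_flow (label_of_aexp P e) (PA a) = true ->
     wfc P PA (AWrite a i e)
 | w_seq : forall c1 c2, wfc P PA c1 -> wfc P PA c2 -> wfc P PA (Seq c1 c2)
 | w_if : forall be c1 c2, label_of_bexp P be = true -> wfc P PA c1 -> wfc P PA c2 ->
     wfc P PA (If be (Seq (setT be) c1) (Seq (setF be) c2))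
 | w_loop1 : forall be sb, label_of_bexp P be = true -> wfc P PA sb -> wfc P PA (Seq (Wl be sb) (setF be))
 | w_loop2 : forall be sb, label_of_bexp P be = true -> wfc P PA sb ->
     wfc P PA (Seq (If be (Seq (Seq (setT be) sb) (Wl be sb)) Skip) (setF be))
 | w_loop3 : forall be sb r, label_of_bexp P be = true -> wfc P PA sb -> wfc P PA r ->
     wfc P PA (Seq (Seq r (Wl be sb)) (setF be)).

Inductive ctx := CHole | CSeq (E : ctx) (c : com) | CLoop (E : ctx) (be : bexp) (sb : com).
Fixpoint plug E h := match E with
 | CHole => h
 | CSeq E c => Seq (plug E h) c
 | CLoop E be sb => Seq (Seq (plug E h) (Wl be sb)) (setF be) end.

Inductive wfctx P PA : ctx -> Prop :=
 | wc_hole : wfctx P PA CHole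
 | wc_seq : forall E c, wfctx P PA E -> wfc P PA c -> wfctx P PA (CSeq E c)
 | wc_loop : forall E be sb, wfctx P PA E -> label_of_bexp P be = true -> wfc P PA sb ->
     wfctx P PA (CLoop E be sb).

Lemma wfctx_plug : forall P PA E h, wfctx P PA E -> wfc P PA h -> wfc P PA (plug E h).
Proof. intros P PA E h HE Hh; induction HE; simpl; [auto | apply w_seq; auto | apply w_loop3; auto]. Qed.

Lemma plug_skip : forall E h, plug E h = Skip -> h = Skip.
Proof. destruct E; simpl; intros; congruence. Qed.

Lemma plug_step : forall E h r m bt c' r' m' bt' d o, h <> Skip ->
  spec_step (plug E h, r, m, bt) (c', r', m', bt') d o ->
  exists h', spec_step (h, r, m, bt) (h', r', m', bt') d o /\ c' = plug E h'.
Proof.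
  induction E; simpl; intros.
  - eauto.
  - inversion H0; subst.
    + destruct (IHE _ _ _ _ _ _ _ _ _ _ H H12) as [h' [? ?]]. subst. eauto.
    + symmetry in H2; apply plug_skip in H2; congruence.
  - inversion H0; subst.
    + inversion H12; subst.
      * destruct (IHE _ _ _ _ _ _ _ _ _ _ H H13) as [h' [? ?]]. subst. eauto.
      * match goal with Hs : Skip = plug _ _ |- _ => symmetry in Hs; apply plug_skip in Hs; congruence end.
Qed.

Definition Inv P PA (bt : bool) r1 (m1 : astate) r2 m2 :=
  pub_equiv P r1 r2 /\ r1 msf = r2 msf /\ (bt = true -> r1 msf = 1) /\ (bt = false -> apub_equiv PA m1 m2).

Definition pubex (P : pub_vars) x (r1 r2 : state) := forall y, y <> x -> P y = true -> r1 y = r2 y.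

Inductive Rel P PA : com -> bool -> state -> astate -> state -> astate -> Prop :=
 | R_wf : forall c bt r1 m1 r2 m2, wfc P PA c -> Inv P PA bt r1 m1 r2 m2 -> Rel P PA c bt r1 m1 r2 m2
 | R_pT : forall E be r1 m1 r2 m2, wfctx P PA E -> label_of_bexp P be = true -> beval r1 be = false ->
     pub_equiv P r1 r2 -> r1 msf = r2 msf -> Rel P PA (plug E (setT be)) true r1 m1 r2 m2
 | R_pF : forall E be r1 m1 r2 m2, wfctx P PA E -> label_of_bexp P be = true -> beval r1 be = true ->
     pub_equiv P r1 r2 -> r1 msf = r2 msf -> Rel P PA (plug E (setF be)) true r1 m1 r2 m2
 | R_pF2 : forall E be r1 m1 r2 m2, wfctx P PA E -> label_of_bexp P be = true -> beval r1 be = true ->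
     pub_equiv P r1 r2 -> r1 msf = r2 msf -> Rel P PA (plug E (Seq Skip (setF be))) true r1 m1 r2 m2
 | R_m : forall E x bt r1 m1 r2 m2, wfctx P PA E -> x <> msf -> pubex P x r1 r2 -> r1 msf = r2 msf ->
     (bt = true -> r1 msf = 1) -> (bt = false -> apub_equiv PA m1 m2) -> (r1 msf = 1 \/ r1 x = r2 x) ->
     Rel P PA (plug E (maskc x)) bt r1 m1 r2 m2
 | R_m2 : forall E x bt r1 m1 r2 m2, wfctx P PA E -> x <> msf -> pubex P x r1 r2 -> r1 msf = r2 msf ->
     (bt = true -> r1 msf = 1) -> (bt = false -> apub_equiv PA m1 m2) -> (r1 msf = 1 \/ r1 x = r2 x) ->
     Rel P PA (plug E (Seq Skip (maskc x))) bt r1 m1 r2 m2.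

Lemma Rel_seq : forall P PA c bt r1 m1 r2 m2 c2, Rel P PA c bt r1 m1 r2 m2 -> wfc P PA c2 ->
  Rel P PA (Seq c c2) bt r1 m1 r2 m2.
Proof.
  intros P PA c bt r1 m1 r2 m2 c2 H H2; destruct H.
  - apply R_wf; auto. apply w_seq; auto.
  - apply (R_pT P PA (CSeq E c2)); auto; constructor; auto.
  - apply (R_pF P PA (CSeq E c2)); auto; constructor; auto.
  - apply (R_pF2 P PA (CSeq E c2)); auto; constructor; auto.
  - apply (R_m P PA (CSeq E c2)); auto; constructor; auto.
  - apply (R_m2 P PA (CSeq E c2)); auto; constructor; auto.
Qed.

Lemma Rel_loop : forall P PA c bt r1 m1 r2 m2 be sb, Rel P PA c bt r1 m1 r2 m2 ->
  label_of_bexp P be = true -> wfc P PA sb ->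
  Rel P PA (Seq (Seq c (Wl be sb)) (setF be)) bt r1 m1 r2 m2.
Proof.
  intros P PA c bt r1 m1 r2 m2 be sb H Hb H2; destruct H.
  - apply R_wf; auto. apply w_loop3; auto.
  - apply (R_pT P PA (CLoop E be sb)); auto; constructor; auto.
  - apply (R_pF P PA (CLoop E be sb)); auto; constructor; auto.
  - apply (R_pF2 P PA (CLoop E be sb)); auto; constructor; auto.
  - apply (R_m P PA (CLoop E be sb)); auto; constructor; auto.
  - apply (R_m2 P PA (CLoop E be sb)); auto; constructor; auto.
Qed.

Lemma upd_neq : forall r x v y, x <> y -> upd r x v y = r y.
Proof. intros. unfold upd. destruct (String.eqb_spec x y); congruence. Qed.
Lemma upd_eq : forall r x v, upd r x v x = v.
Proof. intros. unfold upd. rewrite String.eqb_refl. auto. Qed.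

Lemma pub_upd : forall P r1 r2 x v1 v2, pub_equiv P r1 r2 -> (P x = true -> v1 = v2) ->
  pub_equiv P (upd r1 x v1) (upd r2 x v2).
Proof.
  unfold pub_equiv; intros. destruct (String.eqb_spec x x0).
  - subst. rewrite !upd_eq. auto.
  - rewrite !upd_neq; auto.
Qed.

Lemma Inv_upd : forall P PA bt r1 m1 r2 m2 x v1 v2, Inv P PA bt r1 m1 r2 m2 -> x <> msf ->
  (P x = true -> v1 = v2) -> Inv P PA bt (upd r1 x v1) m1 (upd r2 x v2) m2.
Proof.
  unfold Inv; intros. destruct H as [? [? [? ?]]]. rewrite !upd_neq; auto. split; auto.
  apply pub_upd; auto.
Qed.

Lemma Inv_msf : forall P PA bt r1 m1 r2 m2 v1 v2, Inv P PA bt r1 m1 r2 m2 -> v1 = v2 ->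
  (v1 = r1 msf \/ v1 = 1) -> Inv P PA bt (upd r1 msf v1) m1 (upd r2 msf v2) m2.
Proof.
  unfold Inv; intros. destruct H as [? [? [? ?]]]. rewrite !upd_eq. subst.
  repeat split; auto. apply pub_upd; auto. intros. destruct H1; subst; auto.
Qed.

Lemma length_list_upd : forall l i v, length (list_upd l i v) = length l.
Proof. induction l; destruct i; simpl; auto. Qed.

Lemma apub_aupd : forall PA m1 m2 a i v1 v2, apub_equiv PA m1 m2 -> (PA a = true -> v1 = v2) ->
  apub_equiv PA (aupd m1 a i v1) (aupd m2 a i v2).
Proof.
  unfold apub_equiv, aupd; intros. destruct (String.eqb_spec a a0).
  - subst. rewrite H, H0; auto.
  - auto.
Qed.

Lemma no_step_skip : forall r m bt cf d o, ~ spec_step (Skip, r, m, bt) cf d o.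
Proof. intros r m bt cf d o H; inversion H. Qed.

Lemma wfc_step : forall P PA c, wfc P PA c -> forall bt r1 m1 r2 m2 ca r1' m1' bt1 cb r2' m2' bt2 d o1 o2,
  Inv P PA bt r1 m1 r2 m2 ->
  spec_step (c,r1,m1,bt) (ca,r1',m1',bt1) d o1 ->
  spec_step (c,r2,m2,bt) (cb,r2',m2',bt2) d o2 ->
  o1 = o2 /\ ca = cb /\ bt1 = bt2 /\ Rel P PA ca bt1 r1' m1' r2' m2'.
Proof.
  intros P PA c Hw; induction Hw; intros bt r1 m1 r2 m2 ca r1' m1' bt1 cb r2' m2' bt2 d o1 o2 HI S1 S2;
  pose proof HI as HI'; destruct HI' as [Hp [Hb [HbT HbF]]];
  pose proof (eval_pub P r1 r2 Hp) as [Ea Eb].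
  - inversion S1.
  - inversion S1; subst; inversion S2; subst. repeat split; auto. apply R_wf. constructor.
    apply Inv_upd; auto. intro Hx. rewrite Hx in H0. simpl in H0. auto.
  - unfold setT in *; inversion S1; subst; inversion S2; subst. repeat split; auto. apply R_wf. constructor.
    apply Inv_msf; auto; simpl; rewrite (Eb be H), Hb; auto. destruct (beval r2 be); auto.
  - unfold setF in *; inversion S1; subst; inversion S2; subst. repeat split; auto. apply R_wf. constructor.
    apply Inv_msf; auto; simpl; rewrite (Eb be H), Hb; auto. destruct (beval r2 be); auto.
  - inversion S1; subst; inversion S2; subst; try discriminate.
    + rewrite (Ea i H0). repeat split; auto. apply R_wf. constructor. apply Inv_upd; auto. congruence.
    + rewrite (Ea i H0). repeat split; auto. apply R_wf. constructor. apply Inv_upd; auto. congruence.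
  - inversion S1; subst; inversion S2; subst.
    match goal with H1 : spec_step (ARead _ _ _, r1, _, _) _ _ _,
                    H2 : spec_step (ARead _ _ _, r2, _, _) _ _ _ |- _ =>
      inversion H1; subst; inversion H2; subst; try discriminate end.
    all: rewrite (Ea i H0); repeat split; auto;
      apply (R_m2 P PA CHole); [apply wc_hole | auto | intros y Hy Hpy; rewrite !upd_neq; auto
      | rewrite ?upd_neq; auto | rewrite ?upd_neq; auto | rewrite ?upd_neq; auto | ].
    all: rewrite ?(upd_neq _ x _ msf) by auto.
    + destruct bt2. left; auto. right. rewrite !upd_eq. rewrite (HbF eq_refl a H2). reflexivity.
    + left; auto.
  - inversion S1; subst; inversion S2; subst; try discriminate;
      rewrite (Ea i H); repeat split; auto; apply R_wf; try apply w_skip;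
      repeat split; auto.
    + intros ->. apply apub_aupd; auto. intro Ha. apply Ea. rewrite Ha in H0. simpl in H0. auto.
    + discriminate.
  - inversion S1; subst; inversion S2; subst;
      try (exfalso; eapply no_step_skip; eassumption).
    + match goal with H1 : spec_step (c1, r1, _, _) _ _ _, H2 : spec_step (c1, r2, _, _) _ _ _ |- _ =>
      destruct (IHHw1 _ _ _ _ _ _ _ _ _ _ _ _ _ _ _ _ HI H1 H2) as [? [? [? ?]]] end; subst.
      repeat split; auto. apply Rel_seq; auto.
    + repeat split; auto. apply R_wf; auto.
  - pose proof (Eb be H) as Ebe.
    destruct (beval r1 be) eqn:E1; symmetry in Ebe;
    inversion S1; subst; inversion S2; subst; try discriminate; rewrite ?E1, ?Ebe; repeat split; auto.
    all: first [ apply R_wf; auto; apply w_seq; auto; first [apply w_setT | apply w_setF]; auto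
               | apply (R_pF P PA (CSeq CHole c2)); auto; constructor; auto; constructor
               | apply (R_pT P PA (CSeq CHole c1)); auto; constructor; auto; constructor ].
  - inversion S1; subst; inversion S2; subst.
    match goal with H1 : spec_step (Wl _ _, _, _, _) _ _ _, H2 : spec_step (Wl _ _, _, _, _) _ _ _ |- _ =>
      inversion H1; subst; inversion H2; subst end.
    repeat split; auto. apply R_wf; auto. apply w_loop2; auto.
  - pose proof (Eb be H) as Ebe.
    destruct (beval r1 be) eqn:E1; symmetry in Ebe;
    inversion S1; subst; inversion S2; subst;
    match goal with H1 : spec_step (If _ _ _, _, _, _) _ _ _, H2 : spec_step (If _ _ _, _, _, _) _ _ _ |- _ =>
      inversion H1; subst; inversion H2; subst end; try discriminate;
    rewrite ?E1, ?Ebe; repeat split; auto.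
    all: first [ apply R_wf; auto; first [ apply w_loop3 | apply w_seq ]; auto; first [ apply w_seq | apply w_skip | apply w_setF ]; auto; apply w_setT; auto
               | apply (R_pF2 P PA CHole); auto; constructor
               | apply (R_pT P PA (CLoop (CSeq CHole sb) be sb)); auto; constructor; auto; constructor; auto; constructor ].
  - inversion S1; subst; inversion S2; subst.
    match goal with H1 : spec_step (Seq _ (Wl _ _), _, _, _) _ _ _, H2 : spec_step (Seq _ (Wl _ _), _, _, _) _ _ _ |- _ =>
      inversion H1; subst; inversion H2; subst end;
      try (exfalso; eapply no_step_skip; eassumption).
    + match goal with H1 : spec_step (r, r1, _, _) _ _ _, H2 : spec_step (r, r2, _, _) _ _ _ |- _ =>
      destruct (IHHw2 _ _ _ _ _ _ _ _ _ _ _ _ _ _ _ _ HI H1 H2) as [? [? [? ?]]] end; subst.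
      repeat split; auto. apply Rel_loop; auto.
    + repeat split; auto. apply R_wf; auto. apply w_loop1; auto.
Qed.

Ltac plugdec :=
  match goal with
  | S : spec_step (plug ?E ?h, _, _, _) _ _ _ |- _ =>
      let h' := fresh "h'" in let Hs := fresh "Hs" in let He := fresh "He" in
      apply plug_step in S; [destruct S as [h' [Hs He]]; subst | discriminate]
  end.

Lemma rel_step : forall P PA c bt r1 m1 r2 m2 ca r1' m1' bt1 cb r2' m2' bt2 d o1 o2,
  Rel P PA c bt r1 m1 r2 m2 ->
  spec_step (c,r1,m1,bt) (ca,r1',m1',bt1) d o1 ->
  spec_step (c,r2,m2,bt) (cb,r2',m2',bt2) d o2 ->
  o1 = o2 /\ ca = cb /\ bt1 = bt2 /\ Rel P PA ca bt1 r1' m1' r2' m2'.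
Proof.
  intros P PA c bt r1 m1 r2 m2 ca r1' m1' bt1 cb r2' m2' bt2 d o1 o2 HR.
  destruct HR; intros S1 S2.
  - eapply wfc_step; eauto.
  - assert (E2 : beval r2 be = false) by (rewrite <- (proj2 (eval_pub _ _ _ H2) be H0); auto).
    plugdec; plugdec. unfold setT in *.
    inversion Hs; subst; inversion Hs0; subst. simpl. rewrite H1, E2.
    repeat split; auto. apply R_wf. apply wfctx_plug; auto. apply w_skip.
    repeat split; rewrite ?upd_eq; auto. apply pub_upd; auto. discriminate.
  - assert (E2 : beval r2 be = true) by (rewrite <- (proj2 (eval_pub _ _ _ H2) be H0); auto).
    plugdec; plugdec. unfold setF in *.
    inversion Hs; subst; inversion Hs0; subst. simpl. rewrite H1, E2.
    repeat split; auto. apply R_wf. apply wfctx_plug; auto. apply w_skip.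
    repeat split; rewrite ?upd_eq; auto. apply pub_upd; auto. discriminate.
  - plugdec; plugdec.
    inversion Hs; subst; inversion Hs0; subst; try (exfalso; eapply no_step_skip; eassumption).
    repeat split; auto. apply R_pF; auto.
  - plugdec; plugdec. unfold maskc in *.
    inversion Hs; subst; inversion Hs0; subst. repeat split; auto.
    apply R_wf. apply wfctx_plug; auto. apply w_skip.
    simpl. rewrite <- H2.
    assert (Hxv : (if Nat.eqb (r1 msf) 1 then 0 else r1 x) = (if Nat.eqb (r1 msf) 1 then 0 else r2 x)).
    { destruct H5 as [H6|H6]. rewrite H6; auto. rewrite H6; auto. }
    rewrite Hxv.
    repeat split; rewrite ?upd_neq by auto; auto.
    intros y Hy. destruct (String.eqb_spec x y).
    + subst. rewrite !upd_eq. auto.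
    + rewrite !upd_neq by auto. apply H1; auto.
  - plugdec; plugdec.
    inversion Hs; subst; inversion Hs0; subst; try (exfalso; eapply no_step_skip; eassumption).
    repeat split; auto. apply R_m; auto.
Qed.

Lemma step_do : forall cf cf' d o, spec_step cf cf' d o -> (d = None <-> o = None).
Proof. intros cf cf' d o H; induction H; split; intros; try discriminate; auto; apply IHspec_step; auto. Qed.

Fixpoint silentc c := match c with
  | Asgn _ _ => True | Seq Skip _ => True | Seq c1 _ => silentc c1 | While _ _ => True | _ => False end.

Lemma step_silent : forall cf cf' d o, spec_step cf cf' d o -> (d = None <-> silentc (fst (fst (fst cf)))).
Proof.
  intros cf cf' d o H; induction H; simpl; try (split; intros; first [discriminate | contradiction | auto]; fail).
  destruct c1; simpl in *; auto. inversion H.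
Qed.

Lemma multi_len : forall cf cf' ds os, multi_spec cf cf' ds os -> length ds = length os.
Proof.
  intros cf cf' ds os H; induction H; simpl; auto.
  rewrite !length_app, IHmulti_spec. f_equal.
  destruct d, o; simpl; auto; apply step_do in H; intuition discriminate.
Qed.

Lemma multi_rel : forall cf1 cf1' ds os1, multi_spec cf1 cf1' ds os1 ->
  forall P PA c bt r1 m1 r2 m2 cf2' os2, cf1 = (c,r1,m1,bt) -> Rel P PA c bt r1 m1 r2 m2 ->
  multi_spec (c,r2,m2,bt) cf2' ds os2 -> os1 = os2.
Proof.
  intros cf1 cf1' ds os1 H; induction H; intros P PA c bt r1 m1 r2 m2 cf2' os2 Heq HR H2.
  - apply multi_len in H2. destruct os2; simpl in *; congruence.
  - subst. destruct cf2 as [[[c' r'] m'] b'].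
    inversion H2; subst.
    + destruct d; simpl in *; try discriminate. destruct ds; try discriminate.
      apply multi_len in H0. destruct os; try discriminate.
      destruct o; auto. apply step_do in H. intuition discriminate.
    + match goal with Hs : spec_step (c, r2, m2, bt) ?cf _ _ |- _ => destruct cf as [[[c'' r''] m''] b''] end.
      rename H1 into Hl.
      assert (Hdd : d = d0 /\ ds = ds0).
      { pose proof (step_silent _ _ _ _ H) as Q1. pose proof (step_silent _ _ _ _ H3) as Q2. simpl in *.
        destruct d, d0; simpl in *.
        - injection Hl; intros; subst; auto.
        - exfalso. assert (silentc c) by (apply Q2; auto). apply Q1 in H1. discriminate.
        - exfalso. assert (silentc c) by (apply Q1; auto). apply Q2 in H1. discriminate.
        - auto. }
      destruct Hdd; subst.
      destruct (rel_step _ _ _ _ _ _ _ _ _ _ _ _ _ _ _ _ _ _ _ HR H H3) as [? [? [? ?]]]; subst.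
      f_equal. eapply IHmulti_spec; eauto.
Qed.

Lemma wfc_slh : forall P PA c, ct_well_typed P PA c -> ~ In msf (used_vars c) -> wfc P PA (sel_slh P c).
Proof.
  intros P PA c H; induction H; simpl; intros Hn; rewrite ?in_app_iff in Hn.
  - apply w_skip.
  - apply w_asgn; auto.
  - apply w_seq; [apply IHct_well_typed1 | apply IHct_well_typed2]; intro; apply Hn; auto.
  - apply w_if; auto.
    + apply IHct_well_typed1; intro; apply Hn; auto.
    + apply IHct_well_typed2; intro; apply Hn; auto.
  - apply (w_loop1 P PA be (sel_slh P c)); auto.
  - destruct (P x) eqn:Px.
    + apply w_readm; auto; rewrite Px in H0; destruct (PA a); auto.
    + apply w_read; auto.
  - apply w_write; auto.
Qed.

Theorem theorem6p2 :
  forall (P : pub_vars) (PA : pub_arrs) (c : com)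
         (rho1 rho2 : state) (mu1 mu2 : astate),
    ~ In msf (used_vars c) ->
    rho1 msf = 0 -> rho2 msf = 0 ->
    (forall a, 0 < length (mu1 a)) ->
    (forall a, 0 < length (mu2 a)) ->
    ct_well_typed P PA c ->
    pub_equiv P rho1 rho2 ->
    apub_equiv PA mu1 mu2 ->
    spec_obs_equiv (sel_slh P c, rho1, mu1, false) (sel_slh P c, rho2, mu2, false).
Proof.
  intros P PA c rho1 rho2 mu1 mu2 Hn H1 H2 _ _ Ht Hp Ha.
  intros ds os1 os2 cf1' cf2' M1 M2.
  apply (multi_rel _ _ _ _ M1 P PA (sel_slh P c) false rho1 mu1 rho2 mu2 cf2' os2); auto.
  apply R_wf. apply wfc_slh; auto.
  unfold Inv; repeat split; intros; try congruence; auto.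
Qed.
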